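(* Let $\mathsf V,\mathsf W$ be quantales and $G:\mathsf{Cat}(\mathsf V)\to\mathsf{Cat}(\mathsf W)$ a locally monotone functor with a left adjoint $F:\mathsf{Cat}(\mathsf W)\to\mathsf{Cat}(\mathsf V)$. If $F$ sends fully faithful and fully dense $\mathsf W$-functors to fully faithful and fully dense $\mathsf V$-functors, then $G$ sends Cauchy complete $\mathsf V$-categories to Cauchy complete $\mathsf W$-categories.
   Context: A quantale $(\mathsf V,\otimes,k)$ is a complete anti-symmetric lattice with an associative, commutative operation $\otimes$ with neutral element $k$ distributing over arbitrary suprema. A $\mathsf V$-category $(X,a)$ is a set with $a:X\times X\to\mathsf V$ with $k\le a(x,x)$ and $a(x,y)\otimes a(y,z)\le a(x,z)$; $\mathsf V$-functors $f:(X,a)\to(Y,b)$ satisfy $a(x,y)\le b(f(x),f(y))$; they form $\mathsf{Cat}(\mathsf V)$. For $\mathsf V$-functors $f,g:X\to Y$, $f\le g$ means $k\le b(f(x),g(x))$ for all $x$; $G$ locally monotone means $f\le g$ implies $Gf\le Gg$. $f$ is fully faithful if $a(x,y)=b(f(x),f(y))$, and fully dense if $\bigvee_{x\in X}b(y,f(x))\otimes b(f(x),y')=b(y,y')$ for all $y,y'\in Y$. A $\mathsf V$-module $\varphi:(X,a)\rightharpoonup(Y,b)$ is a map $X\times Y\to\mathsf V$ with $a(x,x')\otimes\varphi(x',y)\le\varphi(x,y)$, $\varphi(x,y)\otimes b(y,y')\le\varphi(x,y')$; composition $(\psi\cdot\varphi)(x,z)=\bigvee_y\varphi(x,y)\otimes\psi(y,z)$;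 $\varphi\dashv\psi$ means $a\le\psi\cdot\varphi$ and $\varphi\cdot\psi\le b$. $E=(\{\star\},k)$. $X$ is Cauchy complete if every left adjoint module $\varphi:E\rightharpoonup X$ is of the form $y\mapsto a(x,y)$ for some $x\in X$. *)

(* Defs.v *)
Set Implicit Arguments.
Unset Strict Implicit.

Record quantale := Quantale {
  qcar :> Type;
  qle : qcar -> qcar -> Prop;
  qsup : (qcar -> Prop) -> qcar;
  qten : qcar -> qcar -> qcar;
  qk : qcar;
  qle_refl : forall x, qle x x;
  qle_trans : forall x y z, qle x y -> qle y z -> qle x z;
  qle_antisym : forall x y, qle x y -> qle y x -> x = y;
  qsup_ub : forall (S : qcar -> Prop) x, S x -> qle x (qsup S);
  qsup_least : forall (S : qcar -> Prop) y, (forall x, S x -> qle x y) -> qle (qsup S) y;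
  qten_assoc : forall x y z, qten x (qten y z) = qten (qten x y) z;
  qten_comm : forall x y, qten x y = qten y x;
  qten_k : forall x, qten qk x = x;
  qten_sup : forall x (S : qcar -> Prop),
    qten x (qsup S) = qsup (fun v => exists y, S y /\ v = qten x y)
}.

Definition qjoin (V : quantale) (I : Type) (f : I -> V) : V :=
  qsup (fun v => exists i, v = f i).

Record vcat (V : quantale) := VCat {
  vobj :> Type;
  vhom : vobj -> vobj -> V;
  vhom_refl : forall x, qle (qk V) (vhom x x);
  vhom_trans : forall x y z, qle (qten (vhom x y) (vhom y z)) (vhom x z)
}.
Arguments vhom {V} v _ _.

Record vfun (V : quantale) (X Y : vcat V) := VFun {
  vmap :> X -> Y;
  vmap_mono : forall x y, qle (vhom X x y) (vhom Y (vmap x) (vmap y))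
}.

Definition vfun_id (V : quantale) (X : vcat V) : vfun X X :=
  @VFun V X X (fun x => x) (fun x y => qle_refl _).

Lemma vfun_comp_mono (V : quantale) (X Y Z : vcat V) (f : vfun X Y) (g : vfun Y Z) :
  forall x y, qle (vhom X x y) (vhom Z (g (f x)) (g (f y))).
Proof. intros x y. eapply qle_trans; [apply (vmap_mono f)| apply (vmap_mono g)]. Qed.

Definition vfun_comp (V : quantale) (X Y Z : vcat V) (g : vfun Y Z) (f : vfun X Y)
  : vfun X Z := @VFun V X Z (fun x => g (f x)) (vfun_comp_mono f g).

Definition vfun_le (V : quantale) (X Y : vcat V) (f g : vfun X Y) : Prop :=
  forall x, qle (qk V) (vhom Y (f x) (g x)).

Definition fully_faithful (V : quantale) (X Y : vcat V) (f : vfun X Y) : Prop :=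
  forall x x', vhom X x x' = vhom Y (f x) (f x').

Definition fully_dense (V : quantale) (X Y : vcat V) (f : vfun X Y) : Prop :=
  forall y y', qjoin (fun x : X => qten (vhom Y y (f x)) (vhom Y (f x) y')) = vhom Y y y'.

Definition is_module (V : quantale) (X Y : vcat V) (phi : X -> Y -> V) : Prop :=
  (forall x x' y, qle (qten (vhom X x x') (phi x' y)) (phi x y)) /\
  (forall x y y', qle (qten (phi x y) (vhom Y y y')) (phi x y')).

Definition mod_comp (V : quantale) (X Y Z : vcat V)
  (psi : Y -> Z -> V) (phi : X -> Y -> V) : X -> Z -> V :=
  fun x z => qjoin (fun y : Y => qten (phi x y) (psi y z)).

Definition mod_le (V : quantale) (X Y : Type) (phi psi : X -> Y -> V) : Prop :=
  forall x y, qle (phi x y) (psi x y).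

Definition mod_adj (V : quantale) (X Y : vcat V)
  (phi : X -> Y -> V) (psi : Y -> X -> V) : Prop :=
  mod_le (vhom X) (mod_comp (Y:=Y) psi phi) /\ mod_le (mod_comp (Y:=X) phi psi) (vhom Y).

Definition unitE (V : quantale) : vcat V.
Proof.
  refine (@VCat V unit (fun _ _ => qk V) _ _).
  - intros; apply qle_refl.
  - intros; rewrite qten_k; apply qle_refl.
Defined.

Definition cauchy_complete (V : quantale) (X : vcat V) : Prop :=
  forall phi : unitE V -> X -> V,
    is_module phi ->
    (exists psi : X -> unitE V -> V, is_module psi /\ mod_adj phi psi) ->
    exists x : X, forall y : X, phi tt y = vhom X x y.

(* Morphisms of Cat(V) are compared by their underlying maps. *)
Record functor (V W : quantale) := Functor {
  fobj :> vcat V -> vcat W;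
  fmap : forall (X Y : vcat V), vfun X Y -> vfun (fobj X) (fobj Y);
  fmap_ext : forall X Y (f g : vfun X Y), (forall x, f x = g x) ->
               forall x, fmap f x = fmap g x;
  fmap_id : forall X x, fmap (vfun_id X) x = x;
  fmap_comp : forall X Y Z (f : vfun X Y) (g : vfun Y Z) x,
      fmap (vfun_comp g f) x = fmap g (fmap f x)
}.
Arguments fmap {V W} f0 {X Y} _.

Definition locally_monotone (V W : quantale) (G : functor V W) : Prop :=
  forall (X Y : vcat V) (f g : vfun X Y), vfun_le f g -> vfun_le (fmap G f) (fmap G g).

Record adjunction (V W : quantale) (F : functor W V) (G : functor V W) := Adjunction {
  adj_unit : forall X : vcat W, vfun X (G (F X));
  adj_counit : forall A : vcat V, vfun (F (G A)) A;
  adj_unit_nat : forall (X Y : vcat W) (f : vfun X Y) x,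
      fmap G (fmap F f) (adj_unit X x) = adj_unit Y (f x);
  adj_counit_nat : forall (A B : vcat V) (g : vfun A B) a,
      g (adj_counit A a) = adj_counit B (fmap F (fmap G g) a);
  adj_triangle_F : forall (X : vcat W) a,
      adj_counit (F X) (fmap F (adj_unit X) a) = a;
  adj_triangle_G : forall (A : vcat V) x,
      fmap G (adj_counit A) (adj_unit (G A) x) = x
}.

(* Main.v *)
Require Import Defs.
From Stdlib Require Import IndefiniteDescription.
Set Implicit Arguments.
Unset Strict Implicit.

Section Q.
Lemma ten_mono_r (V : quantale) (x y z : V) : qle y z -> qle (qten x y) (qten x z).
Proof.
  intros H.
  set (S := fun v : V => v = y \/ v = z).
  assert (Hz : qsup S = z).
  { apply qle_antisym.
    - apply qsup_least. intros v [-> | ->]; [exact H | apply qle_refl].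
    - apply qsup_ub. right; reflexivity. }
  assert (E : qten x z = qten x (qsup S)) by (rewrite Hz; reflexivity).
  rewrite E, qten_sup. apply qsup_ub. exists y. split; [left; reflexivity | reflexivity].
Qed.

Lemma ten_mono_l (V : quantale) (x y z : V) : qle x y -> qle (qten x z) (qten y z).
Proof. intros H. rewrite (qten_comm x), (qten_comm y). apply ten_mono_r, H. Qed.

Lemma ten_mono (V : quantale) (x y x' y' : V) : qle x x' -> qle y y' -> qle (qten x y) (qten x' y').
Proof. intros H1 H2. eapply qle_trans; [apply ten_mono_l, H1 | apply ten_mono_r, H2]. Qed.

Lemma ten_k_r (V : quantale) (x : V) : qten x (qk V) = x.
Proof. rewrite qten_comm. apply qten_k. Qed.

Lemma join_ub (V : quantale) (I : Type) (f : I -> V) i : qle (f i) (qjoin f).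
Proof. apply qsup_ub. exists i; reflexivity. Qed.

Lemma join_least (V : quantale) (I : Type) (f : I -> V) y :
  (forall i, qle (f i) y) -> qle (qjoin f) y.
Proof. intros H. apply qsup_least. intros v [i ->]. apply H. Qed.

Lemma ten_join_le_l (V : quantale) (I : Type) (f : I -> V) x y :
  (forall i, qle (qten x (f i)) y) -> qle (qten x (qjoin f)) y.
Proof.
  intros H. unfold qjoin. rewrite qten_sup. apply qsup_least.
  intros v [w [[i ->] ->]]. apply H.
Qed.

Lemma ten_join_le_r (V : quantale) (I : Type) (f : I -> V) x y :
  (forall i, qle (qten (f i) x) y) -> qle (qten (qjoin f) x) y.
Proof.
  intros H. rewrite qten_comm. apply ten_join_le_l. intros i. rewrite qten_comm. apply H.
Qed.

Lemma le_ten_k (V : quantale) (x a : V) : qle (qk V) a -> qle x (qten x a).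
Proof. intros H. rewrite <- (ten_k_r x) at 1. apply ten_mono_r, H. Qed.

Lemma le_ten_k_l (V : quantale) (x a : V) : qle (qk V) a -> qle x (qten a x).
Proof. intros H. rewrite qten_comm. apply le_ten_k, H. Qed.
End Q.

Lemma extend (V : quantale) (P Q A : vcat V) (j : vfun P Q) (h : vfun P A) :
  fully_faithful j -> fully_dense j -> cauchy_complete A ->
  exists g : vfun Q A, forall p,
    qle (qk V) (vhom A (g (j p)) (h p)) /\ qle (qk V) (vhom A (h p) (g (j p))).
Proof.
  intros ff fd HA.
  set (phi := fun (q : Q) (_ : unitE V) (b : A) =>
                qjoin (fun p : P => qten (vhom Q q (j p)) (vhom A (h p) b))).
  set (psi := fun (q : Q) (a : A) (_ : unitE V) =>
                qjoin (fun p : P => qten (vhom A a (h p)) (vhom Q (j p) q))).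
  assert (Hex : forall q, exists a : A, forall b, phi q tt b = vhom A a b).
  { intros q. apply HA.
    - split.
      + intros u u' b. simpl. rewrite qten_k. apply qle_refl.
      + intros u b b'. unfold phi. apply ten_join_le_r. intros p.
        rewrite <- qten_assoc. eapply qle_trans; [apply ten_mono_r, vhom_trans|].
        apply (join_ub (fun p => qten (vhom Q q (j p)) (vhom A (h p) b'))).
    - exists (psi q). split; [split|split].
      + intros a a' u. unfold psi. apply ten_join_le_l. intros p.
        rewrite qten_assoc. eapply qle_trans; [apply ten_mono_l, vhom_trans|].
        apply (join_ub (fun p => qten (vhom A a (h p)) (vhom Q (j p) q))).
      + intros a u u'. simpl. rewrite ten_k_r. apply qle_refl.
      + intros u v. simpl. unfold mod_comp.
        eapply qle_trans; [apply (@vhom_refl _ Q q)|]. rewrite <- (fd q q).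
        apply join_least. intros p.
        eapply qle_trans; [| apply (join_ub _ (h p))]. simpl.
        apply ten_mono.
        * eapply qle_trans; [apply le_ten_k, (@vhom_refl _ A (h p))|].
          apply (join_ub (fun p' => qten (vhom Q q (j p')) (vhom A (h p') (h p)))).
        * eapply qle_trans; [apply le_ten_k_l, (@vhom_refl _ A (h p))|].
          apply (join_ub (fun p' => qten (vhom A (h p) (h p')) (vhom Q (j p') q))).
      + intros a b. unfold mod_comp. apply join_least. intros u.
        unfold psi, phi. apply ten_join_le_r. intros p. apply ten_join_le_l. intros p'.
        rewrite !qten_assoc.
        eapply qle_trans.
        { apply ten_mono_l. rewrite <- qten_assoc. apply ten_mono_r. apply vhom_trans. }
        rewrite <- ff.
        eapply qle_trans.
        { apply ten_mono_l. apply ten_mono_r. apply (vmap_mono h). }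
        eapply qle_trans; [apply ten_mono_l, vhom_trans|]. apply vhom_trans. }
  set (g0 := fun q => proj1_sig (constructive_indefinite_description _ (Hex q))).
  assert (Hg : forall q b, phi q tt b = vhom A (g0 q) b).
  { intros q. exact (proj2_sig (constructive_indefinite_description _ (Hex q))). }
  assert (Hm : forall q q', qle (vhom Q q q') (vhom A (g0 q) (g0 q'))).
  { intros q q'. eapply qle_trans; [apply le_ten_k, (@vhom_refl _ A (g0 q'))|].
    rewrite <- !Hg. unfold phi. apply ten_join_le_l. intros p.
    rewrite qten_assoc. eapply qle_trans; [apply ten_mono_l, vhom_trans|].
    apply (join_ub (fun p => qten (vhom Q q (j p)) (vhom A (h p) (g0 q')))). }
  exists (VFun Hm). intros p. simpl. split.
  - rewrite <- Hg. unfold phi.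
    eapply qle_trans; [| apply (join_ub _ p)]. simpl.
    rewrite <- (qten_k (qk V)). apply ten_mono; [apply vhom_refl | apply vhom_refl].
  - eapply qle_trans; [apply (@vhom_refl _ A (g0 (j p)))|].
    rewrite <- Hg. unfold phi. apply join_least. intros p'.
    rewrite <- ff. eapply qle_trans; [apply ten_mono_l, (vmap_mono h)|].
    apply vhom_trans.
Qed.

Theorem corollary3p8 (V W : quantale) (G : functor V W) (F : functor W V)
  (adj : adjunction F G) :
  locally_monotone G ->
  (forall (X Y : vcat W) (f : vfun X Y),
      fully_faithful f -> fully_dense f ->
      fully_faithful (fmap F f) /\ fully_dense (fmap F f)) ->
  forall A : vcat V, cauchy_complete A -> cauchy_complete (G A).
Proof.
  intros Hlm HF A HA phi Hphi [psi [Hpsi Hadj]].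
  set (X := G A).
  set (e := qjoin (fun x : X => qten (phi tt x) (psi x tt))).
  assert (Hp1 : forall x y : X, qle (qten (phi tt x) (vhom X x y)) (phi tt y)).
  { intros; apply (proj2 Hphi). }
  assert (Hp2 : forall x y : X, qle (qten (vhom X x y) (psi y tt)) (psi x tt)).
  { intros; apply (proj1 Hpsi). }
  assert (Hp3 : forall x y : X, qle (qten (psi x tt) (phi tt y)) (vhom X x y)).
  { intros x y. eapply qle_trans; [| apply (proj2 Hadj x y)].
    apply (join_ub (fun u : unitE W => qten (psi x u) (phi u y)) tt). }
  assert (He : qle (qk W) e) by exact (proj1 Hadj tt tt).
  set (Yh := fun u v : option X => match u, v with
    | Some x, Some y => vhom X x y
    | None, Some y => phi tt y
    | Some x, None => psi x tt
    | None, None => e end).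
  assert (Yr : forall u, qle (qk W) (Yh u u)).
  { intros [x|]; simpl; [apply vhom_refl | exact He]. }
  assert (Yt : forall u v w, qle (qten (Yh u v) (Yh v w)) (Yh u w)).
  { intros [x|] [y|] [z|]; simpl.
    - apply vhom_trans.
    - apply Hp2.
    - apply Hp3.
    - unfold e. apply ten_join_le_l. intros y. rewrite qten_assoc.
      eapply qle_trans; [apply ten_mono_l, Hp3|]. apply Hp2.
    - apply Hp1.
    - unfold e. apply (join_ub (fun x : X => qten (phi tt x) (psi x tt)) y).
    - unfold e. apply ten_join_le_r. intros y. rewrite <- qten_assoc.
      eapply qle_trans; [apply ten_mono_r, Hp3|]. apply Hp1.
    - unfold e at 1. apply ten_join_le_r. intros y. apply ten_join_le_l. intros z.
      rewrite <- qten_assoc. rewrite (qten_assoc (psi y tt)).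
      eapply qle_trans; [apply ten_mono_r, ten_mono_l, Hp3|].
      eapply qle_trans; [apply ten_mono_r, Hp2|].
      apply (join_ub (fun x : X => qten (phi tt x) (psi x tt)) y). }
  set (Y := VCat Yr Yt).
  assert (Hi : forall x y : X, qle (vhom X x y) (vhom Y (Some x) (Some y))).
  { intros; apply qle_refl. }
  set (i := VFun Hi : vfun X Y).
  assert (iff : fully_faithful i) by (intros x y; reflexivity).
  assert (ifd : fully_dense i).
  { intros [x|] [y|]; simpl; apply qle_antisym.
    - apply join_least. intros; apply vhom_trans.
    - eapply qle_trans; [apply le_ten_k_l, (@vhom_refl _ X x)|].
      apply (join_ub (fun z : X => qten (vhom X x z) (vhom X z y)) x).
    - apply join_least. intros; apply Hp2.
    - eapply qle_trans; [apply le_ten_k_l, (@vhom_refl _ X x)|].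
      apply (join_ub (fun z : X => qten (vhom X x z) (psi z tt)) x).
    - apply join_least. intros; apply Hp1.
    - eapply qle_trans; [apply le_ten_k, (@vhom_refl _ X y)|].
      apply (join_ub (fun z : X => qten (phi tt z) (vhom X z y)) y).
    - apply qle_refl.
    - apply qle_refl. }
  destruct (HF _ _ i iff ifd) as [Fff Ffd].
  destruct (@extend _ _ _ _ (fmap F i) (adj_counit adj A) Fff Ffd HA) as [g Hg].
  set (g' := vfun_comp (fmap G g) (adj_unit adj Y)).
  assert (Hgi : forall x : X, qle (qk W) (vhom X (g' (Some x)) x) /\
                              qle (qk W) (vhom X x (g' (Some x)))).
  { intros x.
    set (f1 := vfun_comp g (fmap F i)).
    set (f2 := adj_counit adj A).
    assert (L1 : vfun_le f1 f2) by (intros p; apply (proj1 (Hg p))).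
    assert (L2 : vfun_le f2 f1) by (intros p; apply (proj2 (Hg p))).
    pose proof (Hlm _ _ _ _ L1 (adj_unit adj X x)) as M1.
    pose proof (Hlm _ _ _ _ L2 (adj_unit adj X x)) as M2.
    unfold f1, f2 in *.
    rewrite fmap_comp, adj_unit_nat in M1, M2. pose proof (@adj_triangle_G _ _ _ _ adj A x) as T. unfold X in M1, M2. rewrite T in M1, M2.
    split; [exact M1 | exact M2]. }
  exists (g' None). intros y. apply qle_antisym.
  - pose proof (vmap_mono g' None (Some y)) as M. simpl in M.
    eapply qle_trans; [| apply vhom_trans].
    eapply qle_trans; [apply le_ten_k, (proj1 (Hgi y))|].
    apply ten_mono_l. exact M.
  - eapply qle_trans; [apply le_ten_k_l, He|].
    unfold e. apply ten_join_le_r. intros x. rewrite <- qten_assoc.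
    eapply qle_trans; [| apply (Hp1 x y)]. apply ten_mono_r.
    eapply qle_trans; [| apply vhom_trans with (y := g' None)]. apply ten_mono_l.
    pose proof (vmap_mono g' (Some x) None) as M. simpl in M.
    eapply qle_trans; [| apply vhom_trans].
    eapply qle_trans; [apply le_ten_k_l, (proj2 (Hgi x))|].
    apply ten_mono_r. exact M.
Qed.
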